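(* Let $g(x)=\dfrac{1}{1-\cos(x)}$ for $x\in(0,2\pi)$. Then $g$ is completely monotonic on $(0,\pi]$ and absolutely monotonic on $[\pi,2\pi)$.
   Context: A function $f:I\to\mathbb{R}$ on an interval $I\subset\mathbb{R}$ is completely monotonic if it has derivatives of all orders and $(-1)^n f^{(n)}(x)\ge 0$ for all $n=0,1,2,\dots$ and $x\in I$; it is absolutely monotonic if it has derivatives of all orders and $f^{(n)}(x)\ge 0$ for all $n=0,1,2,\dots$ and $x\in I$. *)

(* Defs.v *)
From Stdlib Require Import Reals.
From Coquelicot Require Import Coquelicot.
Open Scope R_scope.

(* g(x) = 1/(1 - cos x); only its values on (0, 2*PI) matter. *)
Definition g (x : R) : R := / (1 - cos x).

Definition smooth_on (f : R -> R) (D : R -> Prop) : Prop :=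
  forall (n : nat) (x : R), D x -> ex_derive (Derive_n f n) x.

Definition completely_monotonic_on (f : R -> R) (I : R -> Prop) : Prop :=
  smooth_on f I /\
  forall (n : nat) (x : R), I x -> 0 <= (-1) ^ n * Derive_n f n x.

Definition absolutely_monotonic_on (f : R -> R) (I : R -> Prop) : Prop :=
  smooth_on f I /\
  forall (n : nat) (x : R), I x -> 0 <= Derive_n f n x.

(* Main.v *)
Require Import Defs.
From Stdlib Require Import Reals Lra.
From Coquelicot Require Import Coquelicot.
Open Scope R_scope.

Inductive NP : (R -> R) -> Prop :=
| NPc c : 0 <= c -> NP (fun _ => c)
| NPadd f h : NP f -> NP h -> NP (fun u => f u + h u)
| NPmulX f : NP f -> NP (fun u => u * f u)
| NPext f h : NP f -> (forall u, f u = h u) -> NP h.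

Lemma NP_nonneg f : NP f -> forall u, 0 <= u -> 0 <= f u.
Proof.
  induction 1; intros u Hu.
  - auto.
  - specialize (IHNP1 u Hu); specialize (IHNP2 u Hu); lra.
  - specialize (IHNP u Hu); nra.
  - rewrite <- H0; auto.
Qed.

Lemma NP_deriv f : NP f -> exists f', NP f' /\ forall u, is_derive f u (f' u).
Proof.
  induction 1.
  - exists (fun _ => 0); split. apply NPc; lra.
    intros u; apply (is_derive_const c).
  - destruct IHNP1 as [f1 [N1 D1]]; destruct IHNP2 as [h1 [N2 D2]].
    exists (fun u => f1 u + h1 u); split. now apply NPadd.
    intros u; apply (is_derive_plus f h); auto.
  - destruct IHNP as [f1 [N1 D1]].
    exists (fun u => f u + u * f1 u); split.
    + apply NPadd; auto. now apply NPmulX.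
    + intros u. 
      assert (Hm := is_derive_mult (fun u => u) f u 1 (f1 u) (is_derive_id u) (D1 u)).
      specialize (Hm Rmult_comm).
      replace (f u + u * f1 u) with (plus (mult 1 (f u)) (mult u (f1 u))).
      * eapply is_derive_ext; [|exact Hm]. intros t; reflexivity.
      * unfold plus, mult; simpl. ring.
  - destruct IHNP as [f1 [N1 D1]]. exists f1; split; auto.
    intros u; eapply is_derive_ext; [exact H0|]. auto.
Qed.

Definition cot2 x := cos (x/2) / sin (x/2).

Lemma sin2_pos x : 0 < x < 2*PI -> 0 < sin (x/2).
Proof. intros [H1 H2]; apply sin_gt_0; lra. Qed.

Lemma cot2_deriv x : 0 < x < 2*PI -> is_derive cot2 x (-(1 + cot2 x ^ 2)/2).
Proof.
  intros Hx. assert (Hs := sin2_pos x Hx). assert (Hp := sin2_cos2 (x/2)).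
  unfold cot2. auto_derive; change (x * / 2) with (x / 2).
  - lra.
  - field_simplify; [reflexivity|lra|lra].
Qed.

Lemma g_eq x : 0 < x < 2*PI -> g x = (1 + cot2 x ^ 2) / 2.
Proof.
  intros Hx. assert (Hs := sin2_pos x Hx). assert (Hp := sin2_cos2 (x/2)).
  unfold g, cot2. replace x with (2 * (x/2)) at 1 by field.
  rewrite cos_2a_sin. unfold Rsqr in Hp. field_simplify; [| lra | nra].
  replace (sin (x/2) ^ 2 + cos (x/2) ^ 2) with 1 by (simpl; lra). reflexivity.
Qed.

Lemma NP_mul1u2 f : NP f -> NP (fun u => (1 + u^2) * f u).
Proof.
  intros H. apply NPext with (fun u => f u + u * (u * f u)).
  - apply NPadd; auto. do 2 apply NPmulX; auto.
  - intros u; simpl; ring.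
Qed.

Lemma loc x (f h : R -> R) : 0 < x < 2*PI -> (forall t, 0 < t < 2*PI -> f t = h t) ->
  locally x (fun t => f t = h t).
Proof.
  intros Hx H.
  assert (Ho : open (fun t : R => 0 < t /\ t < 2*PI)) by (apply open_and; [apply open_gt|apply open_lt]).
  specialize (Ho x Hx). eapply filter_imp; [|exact Ho]. intros t Ht; apply H; exact Ht.
Qed.

Lemma step n F F' : (forall u, is_derive F u (F' u)) ->
  (forall x, 0 < x < 2*PI -> Derive_n g n x = (-1/2)^n * F (cot2 x)) ->
  forall x, 0 < x < 2*PI ->
  is_derive (Derive_n g n) x ((-1/2)^(S n) * ((1 + cot2 x^2) * F' (cot2 x))).
Proof.
  intros D E x Hx.
  apply is_derive_ext_loc with (fun t => (-1/2)^n * F (cot2 t)).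
  - apply loc; auto. intros t Ht; symmetry; auto.
  - assert (H1 := is_derive_comp F cot2 x (F' (cot2 x)) _ (D (cot2 x)) (cot2_deriv x Hx)).
    assert (H2 := is_derive_scal _ x ((-1/2)^n) _ H1).
    replace ((-1/2)^(S n) * ((1 + cot2 x^2) * F' (cot2 x))) with
      ((-1/2)^n * scal (- (1 + cot2 x ^ 2) / 2) (F' (cot2 x))).
    + exact H2.
    + unfold scal; simpl; unfold mult; simpl. lazymatch goal with |- ?a = ?b => change (@eq R a b) end. field.
Qed.

Lemma key n : exists F, NP F /\ NP (fun v => (-1)^n * F (-v)) /\
  forall x, 0 < x < 2*PI -> Derive_n g n x = (-1/2)^n * F (cot2 x).
Proof.
  induction n as [|n IH].
  - exists (fun u => (1 + u^2) * (1/2)). split; [|split].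
    + apply NP_mul1u2, NPc; lra.
    + eapply NPext. apply NP_mul1u2, (NPc (1/2)); lra. intros u; simpl; ring.
    + intros x Hx; simpl. rewrite g_eq; auto. field.
  - destruct IH as [F [NF [NG E]]].
    destruct (NP_deriv F NF) as [F' [NF' DF]].
    destruct (NP_deriv _ NG) as [G' [NG' DG]].
    exists (fun u => (1 + u^2) * F' u). split; [|split].
    + apply NP_mul1u2; auto.
    + apply NPext with (fun v => (1 + v^2) * G' v).
      * apply NP_mul1u2; auto.
      * intros v.
        assert (H1 := is_derive_comp F (fun v => -v) v (F' (-v)) _ (DF (-v)) (is_derive_opp _ v 1 (is_derive_id v))).
        assert (H2 := is_derive_scal _ v ((-1)^n) _ H1).
        assert (H3 : G' v = (-1)^n * scal (opp 1) (F' (-v))).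
        { rewrite <- (is_derive_unique _ _ _ (DG v)). apply is_derive_unique; exact H2. }
        rewrite H3. unfold scal, opp; simpl; unfold mult; simpl. field.
    + intros x Hx. simpl Derive_n.
      rewrite (is_derive_unique _ _ _ (step n F F' DF E x Hx)). reflexivity.
Qed.

Theorem theorem1 :
  smooth_on g (fun x => 0 < x < 2 * PI) /\
  completely_monotonic_on g (fun x => 0 < x <= PI) /\
  absolutely_monotonic_on g (fun x => PI <= x < 2 * PI).
Proof.
  assert (Sm : smooth_on g (fun x => 0 < x < 2 * PI)).
  { intros n x Hx. destruct (key n) as [F [NF [_ E]]].
    destruct (NP_deriv F NF) as [F' [_ DF]].
    eexists. apply (step n F F' DF E x Hx). }
  assert (PIpos := PI_RGT_0).
  split; [exact Sm|split; split].
  - intros n x Hx. apply Sm. lra.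
  - intros n x Hx. destruct (key n) as [F [NF [_ E]]].
    rewrite E by lra. rewrite <- Rmult_assoc, <- Rpow_mult_distr.
    apply Rmult_le_pos; [apply pow_le; lra|].
    apply NP_nonneg; auto. unfold cot2.
    apply Rmult_le_pos. apply cos_ge_0; lra.
    left; apply Rinv_0_lt_compat, sin2_pos; lra.
  - intros n x Hx. apply Sm. lra.
  - intros n x Hx. destruct (key n) as [F [NF [NG E]]].
    rewrite E by lra.
    assert (Hc : cot2 x <= 0).
    { unfold cot2. assert (0 < sin (x/2)) by (apply sin2_pos; lra).
      assert (cos (x/2) <= 0) by (apply cos_le_0; lra).
      assert (0 < / sin (x/2)) by (apply Rinv_0_lt_compat; lra). unfold Rdiv; nra. }
    assert (H := NP_nonneg _ NG (- cot2 x) ltac:(lra)). cbv beta in H.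
    rewrite Ropp_involutive in H.
    replace ((-1/2)^n * F (cot2 x)) with ((1/2)^n * ((-1)^n * F (cot2 x))).
    + apply Rmult_le_pos; auto. apply pow_le; lra.
    + rewrite <- Rmult_assoc, <- Rpow_mult_distr. f_equal. f_equal. lra.
Qed.
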